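(* Let $S$ and $T$ be semigroups and let $S\ast T$ be their semigroup free product. Then $S\ast T$ is $U(\mathrm{CF})$ if and only if both $S$ and $T$ are $U(\mathrm{CF})$. (That is, the class of $U(\mathrm{CF})$ semigroups is closed under semigroup free products and under taking free factors.)
   Context: For a semigroup $S$ generated by a finite set $A$, $\mathrm{WP}(S,A)=\{u\#v^{\mathrm{rev}} : u,v\in A^+,\ u=_S v\}$, where $\#\notin A$ and $v^{\mathrm{rev}}$ is the reversal of $v$. A semigroup is $U(\mathrm{CF})$ if it is finitely generated and its word problem with respect to some (equivalently any) finite generating set is context-free. *)

(* Defs.v *)
From Stdlib Require Import List.
From mathcomp Require Import all_boot.
Set Implicit Arguments. Unset Strict Implicit. Unset Printing Implicit Defensive.

Record semigroup := Semigroup {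
  scarrier :> Type;
  sop : scarrier -> scarrier -> scarrier;
  sassoc : forall x y z, sop x (sop y z) = sop (sop x y) z }.

Definition eval_word (S : semigroup) (A : Type) (gen : A -> S) (w : seq A) : option S :=
  match w with
  | [::] => None
  | a :: u => Some (foldl (fun s b => sop s (gen b)) (gen a) u)
  end.

Definition generates (S : semigroup) (A : finType) (gen : A -> S) : Prop :=
  forall x : S, exists w : seq A, eval_word gen w = Some x.

(* Word problem WP(S,A) over the alphabet A ∪ {#}, encoded as option A (None = #). *)
Definition WP (S : semigroup) (A : finType) (gen : A -> S) (w : seq (option A)) : Prop :=
  exists u v : seq A, u <> [::] /\ v <> [::] /\ eval_word gen u = eval_word gen v /\
    w = map Some u ++ None :: map Some (rev v).

Section CFG.
Variables (Sigma : Type) (N : Type).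
Definition rule := (N * seq (N + Sigma))%type.

Definition cfg_step (R : seq rule) (x y : seq (N + Sigma)) : Prop :=
  exists (l r : seq (N + Sigma)) (X : N) (rhs : seq (N + Sigma)),
    List.In (X, rhs) R /\ x = l ++ inl X :: r /\ y = l ++ rhs ++ r.

Inductive cfg_derives (R : seq rule) : seq (N + Sigma) -> seq (N + Sigma) -> Prop :=
  | cfg_refl x : cfg_derives R x x
  | cfg_trans x y z : cfg_step R x y -> cfg_derives R y z -> cfg_derives R x z.
End CFG.

Definition context_free (Sigma : Type) (L : seq Sigma -> Prop) : Prop :=
  exists (N : finType) (S0 : N) (R : seq (rule Sigma N)),
    forall w : seq Sigma, L w <-> cfg_derives R [:: inl S0] (map inr w).

Definition UCF (S : semigroup) : Prop :=
  exists (A : finType) (gen : A -> S), generates gen /\ context_free (WP gen).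

Section FreeProduct.
Variables S T : semigroup.
Definition letter := (S + T)%type.

Definition side (x : letter) : bool := if x is inl _ then true else false.

Fixpoint alt (w : seq letter) : bool :=
  match w with
  | x :: ((y :: _) as w') => (side x != side y) && alt w'
  | _ => true
  end.

Definition reduced (w : seq letter) : bool := (0 < size w) && alt w.

Definition pushL (x : letter) (w : seq letter) : seq letter :=
  match x, w with
  | inl a, inl b :: w' => inl (sop a b) :: w'
  | inr a, inr b :: w' => inr (sop a b) :: w'
  | _, _ => x :: w
  end.

Lemma pushL_pushL (a b : letter) w : side a = side b ->
  pushL a (pushL b w) = pushL (match a, b with
                               | inl a', inl b' => inl (sop a' b')
                               | inr a', inr b' => inr (sop a' b')
                               | _, _ => a end) w.
Proof.
by case: a => a; case: b => b //= _; case: w => [|[c|c] w] //=; rewrite sassoc.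
Qed.

Lemma foldr_pushL_pushL z a r :
  foldr pushL z (pushL a r) = pushL a (foldr pushL z r).
Proof.
case: r => [|b r]; first by case: a.
case: a => a; case: b => b /=; try reflexivity;
  by case: (foldr pushL z r) => [|[c|c] w] //=; rewrite sassoc.
Qed.

Lemma foldr_pushL_assoc x y z :
  foldr pushL z (foldr pushL y x) = foldr pushL (foldr pushL z y) x.
Proof. by elim: x => [|a x IH] //=; rewrite foldr_pushL_pushL IH. Qed.

Lemma reduced_pushL a w : reduced w -> reduced (pushL a w).
Proof.
case: w => [|b w] //; rewrite /reduced /= => Hw.
move: Hw; case: a => a; case: b => b /=; case: w => [|[c|c] w] //=.
Qed.

Lemma reduced_foldr x y : reduced y -> reduced (foldr pushL y x).
Proof. by elim: x => [|a x IH] //= Hy; apply: reduced_pushL; apply: IH. Qed.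

Definition fp_carrier := {w : seq letter | reduced w}.

Definition fp_mul (x y : fp_carrier) : fp_carrier :=
  exist _ (foldr pushL (sval y) (sval x)) (reduced_foldr (sval x) (proj2_sig y)).

Lemma fp_assoc x y z : fp_mul x (fp_mul y z) = fp_mul (fp_mul x y) z.
Proof.
apply: val_inj => /=; by rewrite foldr_pushL_assoc.
Qed.

(* S * T: nonempty alternating sequences of elements of S and T, with
   concatenation followed by merging at the junction. *)
Definition free_product : semigroup := Semigroup fp_assoc.
End FreeProduct.

(* Main.v *)
Require Import Defs.
From Stdlib Require Import List.
From mathcomp Require Import all_boot.
Set Implicit Arguments. Unset Strict Implicit. Unset Printing Implicit Defensive.

Section Gen.
Variables (Sigma N : Type) (R : seq (rule Sigma N)).

Inductive gen : seq (N + Sigma) -> seq Sigma -> Prop :=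
| gen_nil : gen [::] [::]
| gen_t a x w : gen x w -> gen (inr a :: x) (a :: w)
| gen_n X rhs x w1 w2 : List.In (X, rhs) R -> gen rhs w1 -> gen x w2 ->
    gen (inl X :: x) (w1 ++ w2).

Lemma gen_cat x y w1 w2 : gen x w1 -> gen y w2 -> gen (x ++ y) (w1 ++ w2).
Proof.
elim=> [|a x' w' _ IH|X rhs x' v1 v2 Hin Hr _ _ IH] //= Hy.
- by constructor; apply: IH.
- by rewrite -catA; econstructor; eauto.
Qed.

Lemma gen_split x y w : gen (x ++ y) w ->
  exists w1 w2, w = w1 ++ w2 /\ gen x w1 /\ gen y w2.
Proof.
elim: x w => [|[X|a] x IH] w /=.
- by move=> H; exists [::], w; split; [|split; [constructor|]].
- move=> H; inversion H; subst.
  have [v1 [v2 [-> [K1 K2]]]] := IH _ H5.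
  exists (w1 ++ v1), v2; split; first by rewrite catA.
  by split=> //; econstructor; eauto.
- move=> H; inversion H; subst.
  have [v1 [v2 [-> [K1 K2]]]] := IH _ H3.
  by exists (a :: v1), v2; split=> //; split=> //; constructor.
Qed.

Lemma gen_map w : gen (map inr w) w.
Proof. by elim: w => [|a w IH] /=; constructor. Qed.

Lemma gen_term a w : gen [:: inr a] w -> w = [:: a].
Proof. by move=> H; inversion H; subst; inversion H3. Qed.

Lemma derives_ctx l r x y : cfg_derives R x y -> cfg_derives R (l ++ x ++ r) (l ++ y ++ r).
Proof.
elim=> [x0|x0 y0 z0 [l' [r' [X [rhs [Hin [-> ->]]]]]] _ IH]; first by constructor.
apply: cfg_trans IH; exists (l ++ l'), (r' ++ r), X, rhs; split=> //.
by split; rewrite -!catA //= -!catA.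
Qed.

Lemma derives_trans x y z : cfg_derives R x y -> cfg_derives R y z -> cfg_derives R x z.
Proof. by elim=> // x0 y0 z0 Hs _ IH Hz; apply: cfg_trans Hs (IH Hz). Qed.

Lemma gen_derives x w : gen x w -> cfg_derives R x (map inr w).
Proof.
elim=> [|a x' w' _ IH|X rhs x' v1 v2 Hin _ IH1 _ IH2]; first by constructor.
- by have := derives_ctx [:: inr a] [::] IH; rewrite /= !cats0.
- apply: cfg_trans.
    by exists [::], x', X, rhs; split=> //; split; reflexivity.
  rewrite /= map_cat; apply: derives_trans.
    by have := derives_ctx [::] x' IH1; rewrite /=; apply.
  by have := derives_ctx (map inr v1) [::] IH2; rewrite !cats0.
Qed.

Lemma derives_gen x w : cfg_derives R x (map inr w) -> gen x w.
Proof.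
move Hy: (map inr w) => y H; elim: H w Hy => [x0|x0 y0 z0 [l [r [X [rhs [Hin [-> ->]]]]]] _ IH] w Hy.
- by subst; apply: gen_map.
- have := IH _ Hy => /gen_split [w1 [w2 [-> [H1]]]] /gen_split [v1 [v2 [-> [H2 H3]]]].
  apply: gen_cat=> //.
  by have := gen_n Hin H2 H3.
Qed.

Lemma gen_derivesE x w : gen x w <-> cfg_derives R x (map inr w).
Proof. by split; [apply: gen_derives|apply: derives_gen]. Qed.
End Gen.
Section Subst.
Variables (Sigma N Sigma0 N0 : Type) (R : seq (rule Sigma N)) (R0 : seq (rule Sigma0 N0)).
Variables (e : N0 -> N) (t : Sigma0 -> N + Sigma).
Definition liftS (s : N0 + Sigma0) : N + Sigma :=
  match s with inl X => inl (e X) | inr a => t a end.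
Hypothesis HR1 : forall X rhs, List.In (X, rhs) R0 -> List.In (e X, map liftS rhs) R.
Hypothesis HR2 : forall X rhs, List.In (e X, rhs) R ->
  exists rhs0, List.In (X, rhs0) R0 /\ rhs = map liftS rhs0.

Inductive SubW : seq Sigma0 -> seq Sigma -> Prop :=
| Sub_nil : SubW [::] [::]
| Sub_cons a z w1 w2 : gen R [:: t a] w1 -> SubW z w2 -> SubW (a :: z) (w1 ++ w2).

Lemma Sub_cat z1 z2 w1 w2 : SubW z1 w1 -> SubW z2 w2 -> SubW (z1 ++ z2) (w1 ++ w2).
Proof. by elim=> //= a z v1 v2 H _ IH H2; rewrite -catA; constructor; auto. Qed.

Lemma Sub_split z1 z2 w : SubW (z1 ++ z2) w ->
  exists w1 w2, w = w1 ++ w2 /\ SubW z1 w1 /\ SubW z2 w2.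
Proof.
elim: z1 w => [|a z IH] w /=; first by move=> H; exists [::], w; do !split=> //; constructor.
move=> H; inversion H; subst.
have [v1 [v2 [-> [K1 K2]]]] := IH _ H4.
by exists (w1 ++ v1), v2; rewrite catA; do !split=> //; constructor.
Qed.

Lemma subst_gen1 x w : gen R (map liftS x) w -> exists z, gen R0 x z /\ SubW z w.
Proof.
move Hx: (map liftS x) => xx H; elim: H x Hx =>
  [|a xx' w' _ IH|X rhs xx' w1 w2 Hin Hr IHr Hxx IHx] x Hx.
- by case: x Hx => // _; exists [::]; split; constructor.
- case: x Hx => // -[X0|s0] x' //= [Ht Hx'].
  have [z [Hz1 Hz2]] := IH _ Hx'.
  exists (s0 :: z); split; first by constructor.
  by rewrite -[a :: w']cat1s; constructor=> //; rewrite Ht; do !constructor.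
- case: x Hx => // -[X0|s0] x' /= [Ht Hx'].
  + case: Ht => Ht; subst X.
    have [rhs0 [Hin0 Hrhs]] := HR2 Hin.
    have [z1 [Hz1 Hs1]] := IHr _ (esym Hrhs).
    have [z2 [Hz2 Hs2]] := IHx _ Hx'.
    exists (z1 ++ z2); split; first by econstructor; eauto.
    by apply: Sub_cat.
  + have [z2 [Hz2 Hs2]] := IHx _ Hx'.
    exists (s0 :: z2); split; first by constructor.
    constructor=> //; rewrite Ht -[w1]cats0; econstructor; eauto; constructor.
Qed.

Lemma subst_gen2 x z : gen R0 x z -> forall w, SubW z w -> gen R (map liftS x) w.
Proof.
elim=> [|a x' z' _ IH|X rhs x' z1 z2 Hin _ IH1 _ IH2] w /=.
- by move=> H; inversion H; constructor.
- move=> H; inversion H; subst.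
  by have := gen_cat H2 (IH _ H4).
- case/Sub_split=> [w1 [w2 [-> [H1 H2]]]].
  by econstructor; [apply: HR1; eauto|apply: IH1|apply: IH2].
Qed.

Lemma subst_gen x w : gen R (map liftS x) w <-> exists z, gen R0 x z /\ SubW z w.
Proof.
by split; [apply: subst_gen1|move=> [z [H1 H2]]; apply: subst_gen2 H1 _ H2].
Qed.
End Subst.

Section Restrict.
Variables (Sigma Sigma' N : Type) (R : seq (rule Sigma N)).
Variables (f : Sigma' -> Sigma) (g : Sigma -> option Sigma').
Hypothesis gfK : forall b, g (f b) = Some b.
Hypothesis gP : forall a b, g a = Some b -> a = f b.

Definition liftf (s : N + Sigma') : N + Sigma :=
  match s with inl X => inl X | inr b => inr (f b) end.

Fixpoint conv (x : seq (N + Sigma)) : option (seq (N + Sigma')) :=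
  match x with
  | [::] => Some [::]
  | inl X :: x' => omap (cons (inl X)) (conv x')
  | inr a :: x' => match g a, conv x' with
                   | Some b, Some x'' => Some (inr b :: x'')
                   | _, _ => None end
  end.

Lemma convP x x' : conv x = Some x' -> x = map liftf x'.
Proof.
elim: x x' => [|[X|a] x IH] x' /=; first by case=> <-.
- by case E: (conv x) => [y|] //= [<-] /=; rewrite -(IH _ E).
- case Eg: (g a) => [b|] //; case E: (conv x) => [y|] // [<-] /=.
  by rewrite -(IH _ E) -(gP Eg).
Qed.

Definition Rr : seq (rule Sigma' N) :=
  pmap (fun r => omap (fun rhs' => (r.1, rhs')) (conv r.2)) R.

Lemma in_Rr X rhs' : List.In (X, rhs') Rr <->
  exists rhs, List.In (X, rhs) R /\ conv rhs = Some rhs'.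
Proof.
rewrite /Rr; elim: R => [|[Y rhs] R' IH] /=; first by split=> // -[? []].
case E: (conv rhs) => [y|] /=.
- split.
  + case=> [[<- <-]|/IH [r [H1 H2]]]; first by exists rhs; split; [left|].
    by exists r; split; [right|].
  + case=> r [[[<- <-]|H1] H2]; first by left; rewrite E in H2; case: H2 => ->.
    by right; apply/IH; exists r.
- rewrite IH; split; case=> r [H1 H2]; exists r; split=> //; first by right.
  by case: H1 => // -[_ Hr]; subst; rewrite E in H2.
Qed.

Lemma restr1 x' w' : gen Rr x' w' -> gen R (map liftf x') (map f w').
Proof.
elim=> [|a x w _ IH|X rhs x w1 w2 Hin _ IH1 _ IH2] /=; first by constructor.
- by constructor.
- rewrite map_cat; have [rhs0 [H1 H2]] := (in_Rr X rhs).1 Hin.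
  by econstructor; eauto; rewrite (convP H2).
Qed.

Lemma restr2 x w : gen R x w -> forall w', w = map f w' ->
  exists x', conv x = Some x' /\ gen Rr x' w'.
Proof.
elim=> [|a x0 w0 _ IH|X rhs x0 w1 w2 Hin _ IH1 _ IH2] w' Hw.
- by case: w' Hw => // _; exists [::]; split=> //; constructor.
- case: w' Hw => // b w' [-> Hw].
  have [x' [E H]] := IH _ Hw.
  by exists (inr b :: x'); rewrite /= gfK E; split=> //; constructor.
- have Hw' : w' = take (size w1) w' ++ drop (size w1) w' by rewrite cat_take_drop.
  have E1 : w1 = map f (take (size w1) w') by rewrite map_take -Hw take_size_cat.
  have E2 : w2 = map f (drop (size w1) w') by rewrite map_drop -Hw drop_size_cat.
  have [r1 [C1 G1]] := IH1 _ E1.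
  have [r2 [C2 G2]] := IH2 _ E2.
  exists (inl X :: r2); rewrite /= C2; split=> //.
  rewrite Hw'; econstructor; eauto.
  by apply/in_Rr; exists rhs.
Qed.
End Restrict.
Section Eval.
Definition ev (X : semigroup) (A : Type) (gen : A -> X) (a : A) (u : seq A) : X :=
  foldl (fun s b => sop s (gen b)) (gen a) u.

Lemma evalE (X : semigroup) (A : Type) (gen : A -> X) a u :
  eval_word gen (a :: u) = Some (ev gen a u).
Proof. by []. Qed.

Lemma foldl_sop (X : semigroup) (A : Type) (gen : A -> X) s t v :
  foldl (fun s b => sop s (gen b)) (sop s t) v = sop s (foldl (fun s b => sop s (gen b)) t v).
Proof. by elim: v t => [|b v IH] t //=; rewrite -sassoc IH. Qed.

Lemma eval_cat (X : semigroup) (A : Type) (gen : A -> X) u v x y :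
  eval_word gen u = Some x -> eval_word gen v = Some y -> eval_word gen (u ++ v) = Some (sop x y).
Proof.
case: u => // a u [<-]; case: v => // b v [<-] /=; congr Some.
by rewrite foldl_cat /= foldl_sop.
Qed.

Lemma eval_map (X Y : semigroup) (A B : Type) (genA : A -> X) (genB : B -> Y)
  (h : A -> B) (phi : X -> Y) :
  (forall x y, phi (sop x y) = sop (phi x) (phi y)) ->
  (forall a, genB (h a) = phi (genA a)) ->
  forall u, eval_word genB (map h u) = omap phi (eval_word genA u).
Proof.
move=> Hm Hg [|a u] //=; congr Some; rewrite Hg.
elim: u (genA a) => [|b u IH] s //=; by rewrite -IH Hm Hg.
Qed.
End Eval.

Section FP.
Variables S T : semigroup.
Notation P := (free_product S T).
Notation letter := (letter S T).

Definition iS (s : S) : P := exist _ [:: inl s] erefl.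
Definition iT (s : T) : P := exist _ [:: inr s] erefl.

Lemma iS_mul x y : iS (sop x y) = sop (iS x) (iS y).
Proof. exact: val_inj. Qed.
Lemma iT_mul x y : iT (sop x y) = sop (iT x) (iT y).
Proof. exact: val_inj. Qed.
Lemma iS_inj : injective iS.
Proof. by move=> x y [->]. Qed.
Lemma iT_inj : injective iT.
Proof. by move=> x y [->]. Qed.

Lemma sopP (x y : P) : sval (sop x y) = foldr (@pushL S T) (sval y) (sval x).
Proof. by []. Qed.

Definition sideh (w : seq letter) := if w is a :: _ then side a else true.

Lemma sideh_pushL a w : sideh (pushL a w) = side a.
Proof. by case: a => a; case: w => [|[b|b] w]. Qed.

Lemma sideh_mul (x y : P) : sideh (sval (sop x y)) = sideh (sval x).
Proof.
rewrite sopP; case: x => -[|a w] //= _; exact: sideh_pushL.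
Qed.

Lemma sideh_ev (A : Type) (gen : A -> P) a u : sideh (sval (ev gen a u)) = sideh (sval (gen a)).
Proof.
rewrite /ev; elim: u (gen a) => [|b u IH] s //=; by rewrite IH sideh_mul.
Qed.

Definition hasb bb (w : seq letter) := has (fun l : letter => side l == bb) w.

Lemma pushL_has bb (a : letter) w : hasb bb w -> hasb bb (pushL a w).
Proof.
rewrite /hasb; case: a => a; case: w => [|[b|b] w] /=; try done;
  by move=> /orP [->|->]; rewrite ?orbT.
Qed.

Lemma pushL_has2 bb (a : letter) w : side a == bb -> hasb bb (pushL a w).
Proof.
by rewrite /hasb; case: a => a; case: w => [|[b|b] w] //= ->.
Qed.

Lemma mul_has bb (x y : P) :
  hasb bb (sval x) || hasb bb (sval y) ->
  hasb bb (sval (sop x y)).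
Proof.
rewrite sopP /hasb; case: x => w _ /=; elim: w => [|a w IH] //= /orP [/orP [H|H]|H].
- exact: pushL_has2.
- by apply: pushL_has; apply: IH; rewrite H.
- by apply: pushL_has; apply: IH; rewrite H orbT.
Qed.

Lemma ev_has bb (A : Type) (gen : A -> P) a u :
  has (fun c => hasb bb (sval (gen c))) (a :: u) ->
  hasb bb (sval (ev gen a u)).
Proof.
rewrite /ev /=; elim: u (gen a) => [|b u IH] s /=; first by rewrite orbF.
move=> H; apply: IH; case/orP: H => [H|/orP [H|H]].
- by rewrite mul_has ?H.
- by rewrite mul_has ?H ?orbT.
- by rewrite H orbT.
Qed.
End FP.
Section Sub1.
Variables (X P : semigroup) (A : finType) (gen : A -> P) (phi : X -> P) (pB : pred A).
Variable sigma : forall a, pB a -> X.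
Hypothesis phiM : forall x y, phi (sop x y) = sop (phi x) (phi y).
Hypothesis phi_inj : injective phi.
Hypothesis sigmaP : forall a (h : pB a), phi (sigma h) = gen a.
Hypothesis allB : forall u x, eval_word gen u = Some (phi x) -> all pB u.

Notation B := {a : A | pB a}.
Definition genX (b : B) : X := sigma (valP b).

Lemma evalB u : eval_word gen (map val u) = omap phi (eval_word genX u).
Proof. by apply: eval_map=> // b; rewrite /genX sigmaP. Qed.

Lemma all_map_val (u : seq A) : all pB u -> exists u' : seq B, u = map val u'.
Proof.
elim: u => [|a u IH] /=; first by exists [::].
case/andP=> Ha /IH [u' ->]; by exists (Sub a Ha :: u').
Qed.

Lemma map_omap_val (w : seq (option B)) (u : seq A) :
  map (omap val) w = map Some u -> exists u', w = map Some u' /\ u = map val u'.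
Proof.
elim: w u => [|[b|] w IH] [|a u] //=; first by exists [::].
case=> <- /IH [u' [-> ->]]; by exists (b :: u').
Qed.

Lemma map_eq_cat' (U V : Type) (f : U -> V) (w : seq U) x y :
  map f w = x ++ y -> exists w1 w2, w = w1 ++ w2 /\ map f w1 = x /\ map f w2 = y.
Proof.
move=> H; exists (take (size x) w), (drop (size x) w); rewrite cat_take_drop.
by rewrite map_take map_drop H take_size_cat // drop_size_cat.
Qed.

Definition fB (o : option B) : option A := omap val o.
Definition gB (o : option A) : option (option B) :=
  match o with None => Some None | Some a => omap Some (insub a) end.

Lemma gBK o : gB (fB o) = Some o.
Proof. by case: o => [b|] //=; rewrite valK. Qed.

Lemma gBP a b : gB a = Some b -> a = fB b.
Proof.
case: a => [a|] /=; last by case=> <-.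
by case: insubP => [b' _ <- [<-]|].
Qed.

Lemma map_fB_Some u : map fB (map Some u) = map Some (map val u).
Proof. by elim: u => //= a u ->. Qed.

Lemma WPB w : WP genX w <-> WP gen (map fB w).
Proof.
split.
- case=> u [v [Hu [Hv [He ->]]]].
  exists (map val u), (map val v); do !split.
  + by move=> E; apply: Hu; move: E; case: (u).
  + by move=> E; apply: Hv; move: E; case: (v).
  + by rewrite !evalB He.
  + by rewrite map_cat /= !map_fB_Some -map_rev.
- case=> u [v [Hu [Hv [He Hw]]]].
  have [w1 [w2 [Ew [E1 E2]]]] := map_eq_cat' Hw.
  case: w2 E2 Ew => // o w2 [Eo E2] Ew.
  case: o Eo Ew => // _ Ew.
  have [u' [Ew1 Eu]] := map_omap_val E1.
  have [v' [Ew2 Ev]] := map_omap_val E2.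
  have Ev' : v = map val (rev v') by rewrite map_rev -Ev revK.
  rewrite Eu in Hu He; rewrite Ev' in Hv He.
  exists u', (rev v'); do !split.
  + by move=> E; apply: Hu; rewrite E.
  + by move=> E; apply: Hv; rewrite E.
  + move: He; rewrite !evalB.
    case: (eval_word genX u') => [x|]; case: (eval_word genX (rev v')) => [y|] //=.
    by case=> /phi_inj ->.
  + by rewrite Ew Ew1 Ew2 revK.
Qed.

Lemma ucf_sub : generates gen -> context_free (WP gen) -> UCF X.
Proof.
move=> Hg [N [Z [R HR]]]; exists (B : finType), genX; split.
- move=> x; have [u Hu] := Hg (phi x).
  have [u' Eu] := all_map_val (allB Hu).
  exists u'; move: Hu; rewrite Eu evalB.
  by case: (eval_word genX u') => //= y [/phi_inj ->].
- exists N, Z, (Rr R gB) => w.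
  rewrite WPB HR -!gen_derivesE; split.
  + move=> H; have [x' [C G]] := restr2 gBK H (erefl _).
    by move: C => /= [E]; rewrite -E in G.
  + by move=> H; have := restr1 gBP H.
Qed.
End Sub1.
Section Fwd.
Variables S T : semigroup.
Notation P := (free_product S T).

Definition isl (w : seq (letter S T)) : bool := if w is [:: inl _] then true else false.
Definition isr (w : seq (letter S T)) : bool := if w is [:: inr _] then true else false.

Definition getl (w : seq (letter S T)) : isl w -> S :=
  match w as w0 return isl w0 -> S with
  | [:: inl s] => fun _ => s
  | _ => fun h => False_rect S (Bool.diff_false_true h)
  end.
Definition getr (w : seq (letter S T)) : isr w -> T :=
  match w as w0 return isr w0 -> T with
  | [:: inr s] => fun _ => s
  | _ => fun h => False_rect T (Bool.diff_false_true h)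
  end.

Lemma getlP w (h : isl w) : w = [:: inl (getl h)].
Proof. by move: h; case: w => [|[s|t] [|? ?]]. Qed.
Lemma getrP w (h : isr w) : w = [:: inr (getr h)].
Proof. by move: h; case: w => [|[s|t] [|? ?]]. Qed.

Lemma notisl_has w : reduced w -> ~~ isl w -> hasb false w.
Proof. by case: w => [|[s|t] [|[s'|t'] w]]. Qed.
Lemma notisr_has w : reduced w -> ~~ isr w -> hasb true w.
Proof. by case: w => [|[s|t] [|[s'|t'] w]]. Qed.

Lemma fwdS : UCF P -> UCF S.
Proof.
case=> A [gen [Hg Hcf]].
pose pB := fun a => isl (sval (gen a)).
pose sigma := fun a (h : pB a) => getl h.
apply: (@ucf_sub S P A gen (@iS S T) pB sigma) => //.
- exact: iS_mul.
- exact: iS_inj.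
- by move=> a h; apply: val_inj; rewrite /= -getlP.
- move=> [|c u] x //; rewrite evalE => -[Hx]; apply/allP => a Ha; apply/negPn/negP => Hn.
  have : hasb false (sval (ev gen c u)).
    apply: ev_has; apply/hasP; exists a => //.
    by apply: notisl_has=> //; case: (gen a).
  by rewrite Hx.
Qed.

Lemma fwdT : UCF P -> UCF T.
Proof.
case=> A [gen [Hg Hcf]].
pose pB := fun a => isr (sval (gen a)).
pose sigma := fun a (h : pB a) => getr h.
apply: (@ucf_sub T P A gen (@iT S T) pB sigma) => //.
- exact: iT_mul.
- exact: iT_inj.
- by move=> a h; apply: val_inj; rewrite /= -getrP.
- move=> [|c u] x //; rewrite evalE => -[Hx]; apply/allP => a Ha; apply/negPn/negP => Hn.
  have : hasb true (sval (ev gen c u)).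
    apply: ev_has; apply/hasP; exists a => //.
    by apply: notisr_has=> //; case: (gen a).
  by rewrite Hx.
Qed.
End Fwd.
Section SubWP.
Variables (Sigma N Sigma0 : Type) (R : seq (rule Sigma N)).
Variables (t : option Sigma0 -> N + Sigma) (h : N) (emb : Sigma0 -> Sigma).
Hypothesis Ht0 : t None = inl h.
Hypothesis Ht1 : forall a, t (Some a) = inr (emb a).

Lemma SubW_some u w : SubW R t (map Some u) w <-> w = map emb u.
Proof.
split.
- elim: u w => [|a u IH] w /=; first by move=> H; inversion H.
  move=> H; inversion H; subst.
  by rewrite Ht1 in H2; rewrite (gen_term H2) (IH _ H4).
- move=> ->; elim: u => [|a u IH] /=; first by constructor.
  by rewrite -[emb a :: _]cat1s; constructor=> //; rewrite Ht1; do !constructor.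
Qed.

Lemma SubW_WP u v w :
  SubW R t (map Some u ++ None :: map Some v) w <->
  exists y, gen R [:: inl h] y /\ w = map emb u ++ y ++ map emb v.
Proof.
split.
- case/Sub_split=> [w1 [w2 [-> [H1 H2]]]].
  inversion H2 as [|a z y w3 Hy Hz]; subst.
  exists y; split; first by rewrite -Ht0.
  by rewrite ((SubW_some _ _).1 H1) ((SubW_some _ _).1 Hz).
- case=> y [Hy ->]; apply: Sub_cat; first by apply/SubW_some.
  by constructor; [rewrite Ht0|apply/SubW_some].
Qed.
End SubWP.
Section Blocks.
Variables (S T : semigroup) (AS AT : finType) (genS : AS -> S) (genT : AT -> T).
Notation P := (free_product S T).
Definition genP (c : (AS + AT)%type) : P :=
  match c with inl a => iS T (genS a) | inr b => iT S (genT b) end.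

Definition isinl (u : seq (AS + AT)) := if u is inl _ :: _ then true else false.
Definition isinr (u : seq (AS + AT)) := if u is inr _ :: _ then true else false.

Lemma evalP_inl u : eval_word genP (map inl u) = omap (@iS S T) (eval_word genS u).
Proof. by apply: eval_map => //; exact: iS_mul. Qed.
Lemma evalP_inr u : eval_word genP (map inr u) = omap (@iT S T) (eval_word genT u).
Proof. by apply: eval_map => //; exact: iT_mul. Qed.

Lemma decS u : exists u1 u', u = map inl u1 ++ u' /\ ~~ isinl u'.
Proof.
elim: u => [|[a|b] u [u1 [u' [-> H]]]]; first by exists [::], [::].
- by exists (a :: u1), u'.
- by exists [::], (inr b :: map inl u1 ++ u').
Qed.
Lemma decT u : exists u1 u', u = map inr u1 ++ u' /\ ~~ isinr u'.
Proof.
elim: u => [|[a|b] u [u1 [u' [-> H]]]]; first by exists [::], [::].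
- by exists [::], (inl a :: map inr u1 ++ u').
- by exists (b :: u1), u'.
Qed.

Lemma sideh_evalP c u : exists x, eval_word genP (c :: u) = Some x /\
  sideh (sval x) = (if c is inl _ then true else false).
Proof. by exists (ev genP c u); split=> //; rewrite sideh_ev; case: c. Qed.

Lemma reduced_nil (x : P) : sval x <> [::].
Proof. by case: x => -[]. Qed.

Lemma blockS u1 u' : u1 <> [::] -> ~~ isinl u' ->
  exists s1, eval_word genS u1 = Some s1 /\
  omap sval (eval_word genP (map inl u1 ++ u')) =
    Some (inl s1 :: odflt [::] (omap sval (eval_word genP u'))).
Proof.
case: u1 => // a u1 _ Hu'; exists (ev genS a u1); split=> //.
case: u' Hu' => [|[b|b] u''] // _.
- by rewrite cats0 (evalP_inl (a :: u1)).
- have [y [Hy Hs]] := sideh_evalP (inr b) u''.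
  rewrite (eval_cat (evalP_inl (a :: u1)) Hy) Hy /=.
  by move: Hs (reduced_nil (x:=y)); case: (sval y) => [|[?|?] ?].
Qed.

Lemma blockT u1 u' : u1 <> [::] -> ~~ isinr u' ->
  exists s1, eval_word genT u1 = Some s1 /\
  omap sval (eval_word genP (map inr u1 ++ u')) =
    Some (inr s1 :: odflt [::] (omap sval (eval_word genP u'))).
Proof.
case: u1 => // a u1 _ Hu'; exists (ev genT a u1); split=> //.
case: u' Hu' => [|[b|b] u''] // _.
- by rewrite cats0 (evalP_inr (a :: u1)).
- have [y [Hy Hs]] := sideh_evalP (inl b) u''.
  rewrite (eval_cat (evalP_inr (a :: u1)) Hy) Hy /=.
  by move: Hs (reduced_nil (x:=y)); case: (sval y) => [|[?|?] ?].
Qed.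

Lemma generatesP : generates genS -> generates genT -> generates genP.
Proof.
move=> HgS HgT [w Hw].
suff [u Hu] : exists u, omap sval (eval_word genP u) = Some w.
  exists u; move: Hu; case: (eval_word genP u) => //= x [Ex].
  by congr Some; apply: val_inj.
elim: w Hw => [|l w IH] // Hw.
case: w IH Hw => [|l' w] IH Hw.
- case: l Hw => [s|s] _.
  + have [u Hu] := HgS s; exists (map inl u); by rewrite evalP_inl Hu.
  + have [u Hu] := HgT s; exists (map inr u); by rewrite evalP_inr Hu.
- have Hr : reduced (l' :: w) by move: Hw; rewrite /reduced /= => /andP [].
  have [u' Hu'] := IH Hr.
  case: u' Hu' => [|c u'] // Hu'.
  move: Hu'; rewrite evalE /= => -[Hu'].
  have := sideh_ev genP c u'; rewrite Hu' => Hside.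
  case: l Hw => [s|s] Hw.
  + have [u Hu] := HgS s; exists (map inl u ++ c :: u').
    have Hu2 : eval_word genP (map inl u) = Some (iS T s) by rewrite evalP_inl Hu.
    rewrite (eval_cat Hu2 (evalE genP c u')) /= Hu'.
    by move: Hw {IH Hr Hu' Hside}; case: l' => [?|?].
  + have [u Hu] := HgT s; exists (map inr u ++ c :: u').
    have Hu2 : eval_word genP (map inr u) = Some (iT S s) by rewrite evalP_inr Hu.
    rewrite (eval_cat Hu2 (evalE genP c u')) /= Hu'.
    by move: Hw {IH Hr Hu' Hside}; case: l' => [?|?].
Qed.
End Blocks.
From mathcomp Require Import zify.
Section Bwd.
Variables (S T : semigroup) (AS AT : finType) (genS : AS -> S) (genT : AT -> T).
Variables (NS NT : finType) (ZS : NS) (ZT : NT).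
Variables (RS : seq (rule (option AS) NS)) (RT : seq (rule (option AT) NT)).
Hypothesis HS : forall w, WP genS w <-> gen RS [:: inl ZS] w.
Hypothesis HT : forall w, WP genT w <-> gen RT [:: inl ZT] w.

Notation A := (AS + AT)%type.
Notation Sig := (option A).
Notation NN := (((NS + NT) + bool) + unit)%type.
Notation P := (free_product S T).
Notation genP := (genP genS genT).

Definition nS (X : NS) : NN := inl (inl (inl X)).
Definition nT (X : NT) : NN := inl (inl (inr X)).
Definition hS : NN := inl (inr true).
Definition hT : NN := inl (inr false).
Definition st : NN := inr tt.
Definition tS (o : option AS) : NN + Sig :=
  match o with None => inl hS | Some a => inr (Some (inl a)) end.
Definition tT (o : option AT) : NN + Sig :=
  match o with None => inl hT | Some a => inr (Some (inr a)) end.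

Definition extras : seq (rule Sig NN) :=
  [:: (hS, [:: inr None]); (hS, [:: inl (nT ZT)]); (hT, [:: inr None]);
      (hT, [:: inl (nS ZS)]); (st, [:: inl (nS ZS)]); (st, [:: inl (nT ZT)])].

Definition RR : seq (rule Sig NN) :=
  map (fun r => (nS r.1, map (liftS nS tS) r.2)) RS ++
  map (fun r => (nT r.1, map (liftS nT tT) r.2)) RT ++ extras.

Lemma in_RR X rhs : List.In (X, rhs) RR <->
  (exists X0 rhs0, List.In (X0, rhs0) RS /\ X = nS X0 /\ rhs = map (liftS nS tS) rhs0) \/
  (exists X0 rhs0, List.In (X0, rhs0) RT /\ X = nT X0 /\ rhs = map (liftS nT tT) rhs0) \/
  List.In (X, rhs) extras.
Proof.
rewrite /RR !in_app_iff !in_map_iff; split.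
- case=> [[[X0 rhs0] [[<- <-] H]]|[[[X0 rhs0] [[<- <-] H]]|H]].
  + by left; exists X0, rhs0.
  + by right; left; exists X0, rhs0.
  + by right; right.
- case=> [[X0 [rhs0 [H [-> ->]]]]|[[X0 [rhs0 [H [-> ->]]]]|H]].
  + by left; exists (X0, rhs0).
  + by right; left; exists (X0, rhs0).
  + by right; right.
Qed.

Lemma HR1S X rhs : List.In (X, rhs) RS -> List.In (nS X, map (liftS nS tS) rhs) RR.
Proof. by move=> H; apply/in_RR; left; exists X, rhs. Qed.
Lemma HR1T X rhs : List.In (X, rhs) RT -> List.In (nT X, map (liftS nT tT) rhs) RR.
Proof. by move=> H; apply/in_RR; right; left; exists X, rhs. Qed.

Lemma HR2S X rhs : List.In (nS X, rhs) RR ->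
  exists rhs0, List.In (X, rhs0) RS /\ rhs = map (liftS nS tS) rhs0.
Proof.
case/in_RR=> [[X0 [rhs0 [H [[->] ->]]]]|[[X0 [rhs0 [H [E _]]]]|H]] //.
- by exists rhs0.
- by rewrite /extras /= in H; intuition discriminate.
Qed.
Lemma HR2T X rhs : List.In (nT X, rhs) RR ->
  exists rhs0, List.In (X, rhs0) RT /\ rhs = map (liftS nT tT) rhs0.
Proof.
case/in_RR=> [[X0 [rhs0 [H [E _]]]]|[[X0 [rhs0 [H [[->] ->]]]]|H]] //.
- by exists rhs0.
- by rewrite /extras /= in H; intuition discriminate.
Qed.

Lemma gen_single X w : gen RR [:: inl X] w <-> exists rhs, List.In (X, rhs) RR /\ gen RR rhs w.
Proof.
split.
- move=> H; inversion H as [| |X' rhs x w1 w2 Hin Hr Hx]; subst.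
  by inversion Hx; subst; exists rhs; rewrite cats0.
- case=> rhs [Hin Hr]; rewrite -[w]cats0; econstructor; eauto; constructor.
Qed.

Lemma gen_hS y : gen RR [:: inl hS] y <-> y = [:: None] \/ gen RR [:: inl (nT ZT)] y.
Proof.
rewrite gen_single; split.
- case=> rhs [/in_RR H Hr].
  case: H => [[X0 [rhs0 [_ [E _]]]]|[[X0 [rhs0 [_ [E _]]]]|H]] //.
  rewrite /extras /= in H.
  case: H => [E|[E|H]]; try (injection E => E'; subst rhs).
  + by left; exact: gen_term Hr.
  + by right.
  + by intuition discriminate.
- case=> [->|H]; [exists [:: inr None]|exists [:: inl (nT ZT)]]; split=> //;
    try (apply/in_RR; right; right; rewrite /extras /=; tauto).
  by do !constructor.
Qed.

Lemma gen_hT y : gen RR [:: inl hT] y <-> y = [:: None] \/ gen RR [:: inl (nS ZS)] y.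
Proof.
rewrite gen_single; split.
- case=> rhs [/in_RR H Hr].
  case: H => [[X0 [rhs0 [_ [E _]]]]|[[X0 [rhs0 [_ [E _]]]]|H]] //.
  rewrite /extras /= in H.
  case: H => [E|[E|[E|[E|H]]]]; try discriminate; try (injection E => E'; subst rhs).
  + by left; exact: gen_term Hr.
  + by right.
  + by intuition discriminate.
- case=> [->|H]; [exists [:: inr None]|exists [:: inl (nS ZS)]]; split=> //;
    try (apply/in_RR; right; right; rewrite /extras /=; tauto).
  by do !constructor.
Qed.

Lemma gen_st w : gen RR [:: inl st] w <-> gen RR [:: inl (nS ZS)] w \/ gen RR [:: inl (nT ZT)] w.
Proof.
rewrite gen_single; split.
- case=> rhs [/in_RR H Hr].
  case: H => [[X0 [rhs0 [_ [E _]]]]|[[X0 [rhs0 [_ [E _]]]]|H]] //.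
  rewrite /extras /= in H.
  case: H => [E|[E|[E|[E|[E|[E|H]]]]]]; try discriminate; try (injection E => E'; subst rhs).
  + by left.
  + by right.
  + by [].
- case=> H; [exists [:: inl (nS ZS)]|exists [:: inl (nT ZT)]]; split=> //;
    apply/in_RR; right; right; rewrite /extras /=; tauto.
Qed.

Definition GS w := gen RR [:: inl (nS ZS)] w.
Definition GT w := gen RR [:: inl (nT ZT)] w.

Lemma GS_char w : GS w <-> exists u1 v1 y, u1 <> [::] /\ v1 <> [::] /\
  eval_word genS u1 = eval_word genS v1 /\ (y = [:: None] \/ GT y) /\
  w = map (fun a => Some (inl a)) u1 ++ y ++ map (fun a => Some (inl a)) (rev v1).
Proof.
rewrite /GS (subst_gen HR1S HR2S [:: inl ZS] w); split.
- case=> z [/HS [u [v [Hu [Hv [He ->]]]]]].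
  move/(@SubW_WP _ _ _ RR tS hS (fun a => Some (inl a)) erefl (fun a => erefl) u (rev v) w) => -[y [/gen_hS Hy ->]].
  by exists u, v, y.
- case=> u1 [v1 [y [Hu [Hv [He [Hy ->]]]]]].
  exists (map Some u1 ++ None :: map Some (rev v1)); split.
  + by apply/HS; exists u1, v1.
  + apply/(@SubW_WP _ _ _ RR tS hS (fun a => Some (inl a)) erefl (fun a => erefl)).
    by exists y; split=> //; apply/gen_hS.
Qed.

Lemma GT_char w : GT w <-> exists u1 v1 y, u1 <> [::] /\ v1 <> [::] /\
  eval_word genT u1 = eval_word genT v1 /\ (y = [:: None] \/ GS y) /\
  w = map (fun a => Some (inr a)) u1 ++ y ++ map (fun a => Some (inr a)) (rev v1).
Proof.
rewrite /GT (subst_gen HR1T HR2T [:: inl ZT] w); split.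
- case=> z [/HT [u [v [Hu [Hv [He ->]]]]]].
  move/(@SubW_WP _ _ _ RR tT hT (fun a => Some (inr a)) erefl (fun a => erefl) u (rev v) w) => -[y [/gen_hT Hy ->]].
  by exists u, v, y.
- case=> u1 [v1 [y [Hu [Hv [He [Hy ->]]]]]].
  exists (map Some u1 ++ None :: map Some (rev v1)); split.
  + by apply/HT; exists u1, v1.
  + apply/(@SubW_WP _ _ _ RR tT hT (fun a => Some (inr a)) erefl (fun a => erefl)).
    by exists y; split=> //; apply/gen_hT.
Qed.

Definition QS (w : seq Sig) := exists u v, isinl u /\ v <> [::] /\
  eval_word genP u = eval_word genP v /\ w = map Some u ++ None :: map Some (rev v).
Definition QT (w : seq Sig) := exists u v, isinr u /\ v <> [::] /\
  eval_word genP u = eval_word genP v /\ w = map Some u ++ None :: map Some (rev v).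

Lemma mapSome_inl (u : seq AS) : map Some (map inl u) = map (fun a => Some (inl a)) u :> seq Sig.
Proof. by elim: u => //= a u ->. Qed.
Lemma mapSome_inr (u : seq AT) : map Some (map inr u) = map (fun a => Some (inr a)) u :> seq Sig.
Proof. by elim: u => //= a u ->. Qed.

Lemma size_lt (X Y : Type) (f : X -> Y) (u1 : seq X) y z : u1 <> [::] ->
  size y < size (map f u1 ++ y ++ z).
Proof. case: u1 => // a u _; rewrite /= !size_cat size_map; lia. Qed.

Lemma stepS w : (forall y, size y < size w -> (GT y <-> QT y)) -> (GS w <-> QS w).
Proof.
move=> IH; split.
- case/GS_char => u1 [v1 [y [Hu1 [Hv1 [He [Hy Ew]]]]]].
  have [s1 Hs1] : exists s1, eval_word genS u1 = Some s1.
    by case: (u1) Hu1 => // a u _; exists (ev genS a u).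
  have Eu1 : eval_word genP (map inl u1) = Some (iS T s1) by rewrite evalP_inl Hs1.
  have Ev1 : eval_word genP (map inl v1) = Some (iS T s1) by rewrite evalP_inl -He Hs1.
  case: Hy => [Ey|Hy].
  + exists (map inl u1), (map inl v1); do !split.
    * by case: (u1) Hu1.
    * by case: (v1) Hv1.
    * by rewrite Eu1 Ev1.
    * by rewrite Ew Ey -map_rev !mapSome_inl.
  + have /IH [Hq _] : size y < size w by rewrite Ew; apply: size_lt.
    case: (Hq Hy) => u' [v' [Hu' [Hv' [He' Ey]]]].
    have [x' Ex'] : exists x', eval_word genP u' = Some x'.
      by case: (u') Hu' => // c u _; exists (ev genP c u).
    have Ex'' : eval_word genP v' = Some x' by rewrite -He'.
    exists (map inl u1 ++ u'), (map inl v1 ++ v'); do !split.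
    * by case: (u1) Hu1.
    * by case: (v1) Hv1.
    * by rewrite (eval_cat Eu1 Ex') (eval_cat Ev1 Ex'').
    * by rewrite Ew Ey rev_cat !map_cat -!map_rev !mapSome_inl -!catA.
- case=> u [v [Hu [Hv [He Ew]]]].
  have [u1 [u' [Eu Hu']]] := decS u.
  have [v1 [v' [Ev Hv']]] := decS v.
  have Hu1 : u1 <> [::].
    by move=> E; move: Hu; rewrite Eu E /= (negbTE Hu').
  have Hv1 : v1 <> [::].
    move=> E; rewrite E /= in Ev.
    case: (u) Hu He => [|[a|a] u0] // _ He0.
    move: Hv He0 Hv'; rewrite Ev; case: (v') => [|[b'|b'] v0] // _ He0 _.
    have [x [Ex Sx]] := sideh_evalP genS genT (inl a) u0.
    have [x' [Ex' Sx']] := sideh_evalP genS genT (inr b') v0.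
    by move: He0; rewrite Ex Ex' => -[Exx]; rewrite Exx Sx' in Sx.
  have [s1 [Hs1 Bu]] := blockS genS genT Hu1 Hu'.
  have [t1 [Ht1 Bv]] := blockS genS genT Hv1 Hv'.
  move: Bu; rewrite -Eu He Ev Bv => -[Est Etl].
  have Ew' : w = map (fun a => Some (inl a)) u1 ++ (map Some u' ++ None :: map Some (rev v'))
                 ++ map (fun a => Some (inl a)) (rev v1).
    by rewrite Ew Eu Ev rev_cat !map_cat -!map_rev !mapSome_inl -!catA.
  apply/GS_char; exists u1, v1, (map Some u' ++ None :: map Some (rev v')); do !split=> //.
  + by rewrite Hs1 Ht1 Est.
  + have Hsz := size_lt (fun a : AS => Some (inl a) : Sig) (map Some u' ++ None :: map Some (rev v')) (map (fun a => Some (inl a)) (rev v1)) Hu1.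
    rewrite -Ew' in Hsz.
    move: Hsz Etl Hu' Hv'; case: (u') => [|c u0]; case: (v') => [|c' v0] Hsz Etl Hu' Hv'.
    * by left.
    * by exfalso; move: Etl; rewrite evalE /= => /reduced_nil.
    * by exfalso; move: Etl; rewrite evalE /= => /esym /reduced_nil.
    * right; apply/(IH _ Hsz); exists (c :: u0), (c' :: v0); do !split=> //.
      - by move: Hu'; case: (c).
      - by move: Etl; rewrite !evalE /= => /val_inj ->.
Qed.
Lemma stepT w : (forall y, size y < size w -> (GS y <-> QS y)) -> (GT w <-> QT w).
Proof.
move=> IH; split.
- case/GT_char => u1 [v1 [y [Hu1 [Hv1 [He [Hy Ew]]]]]].
  have [s1 Hs1] : exists s1, eval_word genT u1 = Some s1.
    by case: (u1) Hu1 => // a u _; exists (ev genT a u).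
  have Eu1 : eval_word genP (map inr u1) = Some (iT S s1) by rewrite evalP_inr Hs1.
  have Ev1 : eval_word genP (map inr v1) = Some (iT S s1) by rewrite evalP_inr -He Hs1.
  case: Hy => [Ey|Hy].
  + exists (map inr u1), (map inr v1); do !split.
    * by case: (u1) Hu1.
    * by case: (v1) Hv1.
    * by rewrite Eu1 Ev1.
    * by rewrite Ew Ey -map_rev !mapSome_inr.
  + have /IH [Hq _] : size y < size w by rewrite Ew; apply: size_lt.
    case: (Hq Hy) => u' [v' [Hu' [Hv' [He' Ey]]]].
    have [x' Ex'] : exists x', eval_word genP u' = Some x'.
      by case: (u') Hu' => // c u _; exists (ev genP c u).
    have Ex'' : eval_word genP v' = Some x' by rewrite -He'.
    exists (map inr u1 ++ u'), (map inr v1 ++ v'); do !split.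
    * by case: (u1) Hu1.
    * by case: (v1) Hv1.
    * by rewrite (eval_cat Eu1 Ex') (eval_cat Ev1 Ex'').
    * by rewrite Ew Ey rev_cat !map_cat -!map_rev !mapSome_inr -!catA.
- case=> u [v [Hu [Hv [He Ew]]]].
  have [u1 [u' [Eu Hu']]] := decT u.
  have [v1 [v' [Ev Hv']]] := decT v.
  have Hu1 : u1 <> [::].
    by move=> E; move: Hu; rewrite Eu E /= (negbTE Hu').
  have Hv1 : v1 <> [::].
    move=> E; rewrite E /= in Ev.
    case: (u) Hu He => [|[a|a] u0] // _ He0.
    move: Hv He0 Hv'; rewrite Ev; case: (v') => [|[b'|b'] v0] // _ He0 _.
    have [x [Ex Sx]] := sideh_evalP genS genT (inr a) u0.
    have [x' [Ex' Sx']] := sideh_evalP genS genT (inl b') v0.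
    by move: He0; rewrite Ex Ex' => -[Exx]; rewrite Exx Sx' in Sx.
  have [s1 [Hs1 Bu]] := blockT genS genT Hu1 Hu'.
  have [t1 [Ht1 Bv]] := blockT genS genT Hv1 Hv'.
  move: Bu; rewrite -Eu He Ev Bv => -[Est Etl].
  have Ew' : w = map (fun a => Some (inr a)) u1 ++ (map Some u' ++ None :: map Some (rev v'))
                 ++ map (fun a => Some (inr a)) (rev v1).
    by rewrite Ew Eu Ev rev_cat !map_cat -!map_rev !mapSome_inr -!catA.
  apply/GT_char; exists u1, v1, (map Some u' ++ None :: map Some (rev v')); do !split=> //.
  + by rewrite Hs1 Ht1 Est.
  + have Hsz := size_lt (fun a : AT => Some (inr a) : Sig) (map Some u' ++ None :: map Some (rev v')) (map (fun a => Some (inr a)) (rev v1)) Hu1.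
    rewrite -Ew' in Hsz.
    move: Hsz Etl Hu' Hv'; case: (u') => [|c u0]; case: (v') => [|c' v0] Hsz Etl Hu' Hv'.
    * by left.
    * by exfalso; move: Etl; rewrite evalE /= => /reduced_nil.
    * by exfalso; move: Etl; rewrite evalE /= => /esym /reduced_nil.
    * right; apply/(IH _ Hsz); exists (c :: u0), (c' :: v0); do !split=> //.
      - by move: Hu'; case: (c).
      - by move: Etl; rewrite !evalE /= => /val_inj ->.
Qed.

Lemma mainGQ n : forall w, size w <= n -> (GS w <-> QS w) /\ (GT w <-> QT w).
Proof.
elim: n => [|n IHn] w Hw; split; [apply: stepS|apply: stepT|apply: stepS|apply: stepT] => y Hy.
- exfalso; lia.
- exfalso; lia.
- by have [] := IHn y ltac:(lia).
- by have [] := IHn y ltac:(lia).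
Qed.

Lemma WPP w : WP genP w <-> QS w \/ QT w.
Proof.
split.
- case=> u [v [Hu [Hv [He Ew]]]].
  case: u Hu He Ew => [|[a|b] u] // _ He Ew.
  + by left; exists (inl a :: u), v.
  + by right; exists (inr b :: u), v.
- case=> [[u [v [Hu [Hv [He Ew]]]]]|[u [v [Hu [Hv [He Ew]]]]]];
    exists u, v; do !split=> //; by move=> E; rewrite E in Hu.
Qed.

Lemma cfP : context_free (WP genP).
Proof.
exists NN, st, RR => w.
rewrite -gen_derivesE gen_st WPP.
have [H1 H2] := mainGQ (leqnn (size w)).
by rewrite -/(GS w) -/(GT w) H1 H2.
Qed.
End Bwd.

Lemma bwd (S T : semigroup) : UCF S -> UCF T -> UCF (free_product S T).
Proof.
case=> AS [genS [HgS [NS [ZS [RS HRS]]]]].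
case=> AT [genT [HgT [NT [ZT [RT HRT]]]]].
exists (AS + AT)%type, (genP genS genT); split; first exact: generatesP.
apply: (@cfP S T AS AT genS genT NS NT ZS ZT RS RT).
- by move=> w; rewrite HRS gen_derivesE.
- by move=> w; rewrite HRT gen_derivesE.
Qed.

Theorem mainTheorem9 (S T : semigroup) :
  UCF (free_product S T) <-> UCF S /\ UCF T.
Proof.
split; first by move=> H; split; [exact: fwdS H|exact: fwdT H].
by case=> H1 H2; exact: bwd.
Qed.
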